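(* Let $A$ be a finite direct product of elementary abelian groups, written additively, let $U$ be an $F$-relevant subgroup of $\mathrm{Aut}(A)$, let $N(U) = N_{\mathrm{Aut}(A)}(U)$, and let $\delta \in Z^2(U,A)$. Then restriction to $A$ defines an epimorphism \[ \eta : \mathrm{Aut}(G_\delta) \to \mathrm{Stab}_{N(U)}([\delta]),\quad \alpha \mapsto \alpha|_A, \] and $\ker(\eta) \cong Z^1(U,A)$.
   Context: $U$ acts on $A$ naturally, and $Z^1(U,A)$, $Z^2(U,A)$, $B^2(U,A)$, $H^2(U,A)$ are the groups of $1$-cocycles, $2$-cocycles, $2$-coboundaries and the second cohomology group for this action; $[\delta] = \delta + B^2(U,A)$. $G_\delta$ denotes the extension of $A$ by $U$ defined by $\delta$ (with $A$ identified with its canonical normal subgroup of $G_\delta$). The group $N(U)$ acts on $Z^2(U,A)$ by $(g(\delta))(u,v) = g\big(\delta(g^{-1}ug, g^{-1}vg)\big)$, inducing an action on $H^2(U,A)$ by $g([\delta]) = [g(\delta)]$. A subgroup $N \le \mathrm{Aut}(A)$ centralizes a series through $A$ if there is an $N$-invariant series $A = A_1 > \cdots > A_{l+1} = \{1\}$ with $N$ acting trivially on each $A_i/A_{i+1}$; $U\le\mathrm{Aut}(A)$ is $F$-relevant if no non-trivial normal subgroup of $U$ centralizes a series through $A$. *)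

(* Defs.v *)
From HB Require Import structures.
From mathcomp Require Import all_boot all_order all_fingroup all_solvable.
Set Implicit Arguments. Unset Strict Implicit. Unset Printing Implicit Defensive.
Import GroupScope.

Section Defs.
Variable gT : finGroupType.

(* Elements of Aut(A) are permutations u : {perm gT}, acting on
   A by evaluation u a.  MathComp's product of permutations is
   (u * v) x = v (u x), so the paper's composition u∘v ("uv") is (v * u)%g.
   A is written multiplicatively here. *)
Definition pcomp (u v : {perm gT}) : {perm gT} := (v * u)%g.

Definition is_cocycle2 (A : {set gT}) (U : {set {perm gT}})
    (d : {perm gT} -> {perm gT} -> gT) : Prop :=
  (forall u v, u \in U -> v \in U -> d u v \in A) /\
  (forall u v w, u \in U -> v \in U -> w \in U ->
     u (d v w) * d u (pcomp v w) = d (pcomp u v) w * d u v).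

Definition cobound (c : {perm gT} -> gT) (u v : {perm gT}) : gT :=
  u (c v) * (c (pcomp u v))^-1 * c u.

(* Action of N(U) on Z^2:  (g δ)(u,v) = g(δ(g^-1 u g, g^-1 v g)), where
   g^-1 u g is the composite g^-1 ∘ u ∘ g, i.e. (g * u * g^-1)%g = u ^ g^-1. *)
Definition actZ2 (g : {perm gT}) (d : {perm gT} -> {perm gT} -> gT) u v : gT :=
  g (d (u ^ g^-1) (v ^ g^-1)).

Definition fixes_class (A : {set gT}) (U : {set {perm gT}})
    (d : {perm gT} -> {perm gT} -> gT) (g : {perm gT}) : bool :=
  [exists c : {ffun {perm gT} -> gT},
     [forall u in U, c u \in A] &&
     [forall u in U, forall v in U, actZ2 g d u v == d u v * cobound c u v]].

Definition StabN (A : {set gT}) (U : {set {perm gT}})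
    (d : {perm gT} -> {perm gT} -> gT) : {set {perm gT}} :=
  [set g in 'N_(Aut A)(U) | fixes_class A U d g].

(* 1-cocycles U -> A, represented by finite functions that are 1 outside U;
   their group law is pointwise multiplication. *)
Definition Z1 (A : {set gT}) (U : {set {perm gT}}) : {set {ffun {perm gT} -> gT}} :=
  [set f : {ffun {perm gT} -> gT} |
     [&& [forall u, (u \notin U) ==> (f u == 1)],
         [forall u in U, f u \in A] &
         [forall u in U, forall v in U, f (pcomp u v) == f u * u (f v)]]].

Definition GT := (gT * {perm gT})%type.
Definition Gd (A : {set gT}) (U : {set {perm gT}}) : {set GT} := setX A U.
Definition gdmul (d : {perm gT} -> {perm gT} -> gT) (x y : GT) : GT :=
  (x.1 * x.2 y.1 * d x.2 y.2, pcomp x.2 y.2).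

Definition AutGd (A : {set gT}) (U : {set {perm gT}})
    (d : {perm gT} -> {perm gT} -> gT) : {set {perm GT}} :=
  [set f : {perm GT} | perm_on (Gd A U) f &&
     [forall x in Gd A U, forall y in Gd A U, f (gdmul d x y) == gdmul d (f x) (f y)]].

(* Canonical identification of A with the normal subgroup {(a,1)} of G_δ
   (a group isomorphism also when δ is not normalised). *)
Definition iotaA (d : {perm gT} -> {perm gT} -> gT) (a : gT) : GT :=
  (a * (d 1 1)^-1, 1).

(* Restriction to A: the automorphism g of A with α ∘ ι = ι ∘ g on A
   (defaults to 1 if no such g exists). *)
Definition restrA (A : {set gT}) (d : {perm gT} -> {perm gT} -> gT)
    (al : {perm GT}) : {perm gT} :=
  odflt 1 [pick g in Aut A | [forall a in A, al (iotaA d a) == iotaA d (g a)]].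

Definition centralizes_series (A : {group gT}) (N : {set {perm gT}}) : Prop :=
  exists s : seq {group gT},
    [/\ path (fun X Y : {group gT} =>
                (Y \proper X) && [forall n in N, forall a in X, n a * a^-1 \in Y])
             A s,
        last A s :=: 1 &
        forall X : {group gT}, X \in A :: s -> forall n, n \in N -> n @: X = X].

Definition F_relevant (A : {group gT}) (U : {group {perm gT}}) : Prop :=
  forall N : {group {perm gT}}, N <| U -> centralizes_series A N -> N :=: 1.

End Defs.

(* Main.v *)
Require Import Defs.
From HB Require Import structures.
From mathcomp Require Import all_boot all_order all_fingroup all_solvable.
Import GroupScope.

Module Helpers.
Set Implicit Arguments. Unset Strict Implicit. Unset Printing Implicit Defensive.

Section Basic.
Variable gT : finGroupType.
Implicit Types (G : {group gT}) (g : {perm gT}).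

Lemma autA G g a : g \in Aut G -> a \in G -> g a \in G.
Proof. by move=> h1 h2; apply: (Aut_closed h1 h2). Qed.

Lemma autM G g a b : g \in Aut G -> a \in G -> b \in G -> g (a * b) = g a * g b.
Proof. by move=> /Aut_morphic/morphicP h Aa Ab; rewrite h. Qed.

Lemma aut1 G g : g \in Aut G -> g 1 = 1.
Proof.
move=> gA; have := autM gA (group1 G) (group1 G); rewrite mulg1 => h.
by apply: (mulgI (g 1)); rewrite mulg1 -h.
Qed.

Lemma autV G g a : g \in Aut G -> a \in G -> g a^-1 = (g a)^-1.
Proof.
move=> gA Aa; apply: (mulgI (g a)); rewrite mulgV -(autM gA) ?groupV //.
by rewrite mulgV (aut1 gA).
Qed.

Lemma abC G a b : abelian G -> a \in G -> b \in G -> a * b = b * a.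
Proof. by move=> /centsP h Aa Ab; apply: h. Qed.

End Basic.

Section Main.
Variables (gT : finGroupType) (A : {group gT}) (U : {group {perm gT}})
  (d : {perm gT} -> {perm gT} -> gT).
Hypotheses (Aab : abelian A) (hUA : U \subset Aut A) (hd : is_cocycle2 A U d).
Local Notation io := (iotaA d).
Implicit Types (u v w : {perm gT}) (a b z : gT) (x y : GT gT).
Local Notation e := (d 1 1).
Local Notation G := (Gd A U).
Local Notation mul := (gdmul d).

Lemma uAut u : u \in U -> u \in Aut A.
Proof. exact: (subsetP hUA). Qed.

Lemma uA u a : u \in U -> a \in A -> u a \in A.
Proof. by move/uAut; apply: autA. Qed.

Lemma dA u v : u \in U -> v \in U -> d u v \in A.
Proof. by case: hd => h _; apply: h. Qed.

Lemma eA : e \in A.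
Proof. by rewrite dA. Qed.

Lemma pc1u u : Defs.pcomp 1 u = u. Proof. by rewrite /Defs.pcomp mulg1. Qed.
Lemma pcu1 u : Defs.pcomp u 1 = u. Proof. by rewrite /Defs.pcomp mul1g. Qed.

Lemma d1u u : u \in U -> d 1 u = e.
Proof.
move=> Uu; case: hd => _ h; have := h 1 1 u (group1 U) (group1 U) Uu.
by rewrite perm1 !pc1u => /mulgI.
Qed.

Lemma du1 u : u \in U -> d u 1 = u e.
Proof.
move=> Uu; case: hd => _ h; have := h u 1 1 Uu (group1 U) (group1 U).
by rewrite pc1u pcu1 => /mulIg/esym.
Qed.

Lemma ioGd a : a \in A -> io a \in G.
Proof. by move=> Aa; rewrite /Gd in_setX /= group1 andbT groupM ?groupV ?eA. Qed.

Lemma io_inj : injective io.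
Proof. by move=> a b [] /mulIg. Qed.

Lemma GdP x : x \in G -> x.1 \in A /\ x.2 \in U.
Proof. by case: x => x1 x2; rewrite /Gd in_setX => /andP. Qed.

Lemma ioMl z x : x \in G -> mul (io z) x = (z * x.1, x.2).
Proof.
case/GdP => Ax Ux; rewrite /gdmul /= perm1 pc1u d1u //.
by rewrite -!mulgA (abC Aab Ax eA) mulKg.
Qed.

Lemma ioMr x a : x \in G -> a \in A -> mul x (io a) = mul (io (x.2 a)) x.
Proof.
move=> Gx Aa; rewrite ioMl //; case/GdP: Gx => Ax Ux.
rewrite /gdmul /= (du1 Ux) pcu1 (autM (uAut Ux)) ?groupV ?eA //.
rewrite (autV (uAut Ux)) ?eA // -mulgA mulgKV (abC Aab Ax) ?uA //.
Qed.

Lemma ioM a b : a \in A -> b \in A -> mul (io a) (io b) = io (a * b).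
Proof. by move=> Aa Ab; rewrite ioMl ?ioGd //= mulgA. Qed.

Lemma GdM x y : x \in G -> y \in G -> mul x y \in G.
Proof.
move=> /GdP[Ax Ux] /GdP[Ay Uy]; rewrite /Gd /gdmul in_setX /=.
by rewrite !groupM ?uA ?dA.
Qed.



Lemma Aut_on g : g \in Aut A -> perm_on A g.
Proof. by rewrite inE => /andP[]. Qed.

Lemma idem x : x \in G -> mul x x = x -> x = io 1.
Proof.
case: x => y w /GdP[/= Ay Uw] [h1 h2].
have w1 : w = 1 by apply: (mulIg w); rewrite mul1g; exact: h2.
move: h1; rewrite w1 perm1 -mulgA => /(canRL (mulKg y)).
rewrite mulVg => /(canRL (mulgK e)); rewrite mul1g => ->.
by rewrite /iotaA mul1g.
Qed.

Lemma restrA_eq (al : {perm GT gT}) (h : {perm gT}) : h \in Aut A -> (forall a, a \in A -> al (io a) = io (h a)) ->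
  restrA A d al = h.
Proof.
move=> hA hP; rewrite /restrA; case: pickP => [g /andP[gA /forall_inP H] | H0] /=.
  apply/permP => x; case: (boolP (x \in A)) => Ax.
    by apply: io_inj; rewrite -(eqP (H x Ax)) hP.
  by rewrite !(out_perm (Aut_on _)).
have := H0 h; rewrite hA /=; move/negbT/negP; case.
by apply/forall_inP => a Aa; rewrite hP.
Qed.

Lemma ac1 a b c f : a \in A -> b \in A -> c \in A -> f \in A ->
  a * b * c * f = c * (b * f * a).
Proof.
move=> Aa Ab Ac Af; rewrite (abC Aab (groupM Aa Ab) Ac) -!mulgA; congr (_ * _).
by rewrite mulgA (abC Aab Aa Ab) -mulgA (abC Aab Aa Af).
Qed.

Lemma swp (a b c : gT) : a \in A -> b \in A -> a * (b * c) = b * (a * c).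
Proof. by move=> Aa Ab; rewrite mulgA (abC Aab Aa Ab) -mulgA. Qed.

Lemma ac2 a1 a2 D P Q C : a2 \in A -> D \in A -> P \in A -> Q \in A -> C \in A ->
  a1 * a2 * (D * (P * C^-1 * Q)) * C = a1 * Q * (a2 * P) * D.
Proof.
move=> A2 AD AP AQ HC; rewrite -!mulgA (abC Aab AQ HC) mulKg; congr (_ * _).
by rewrite (abC Aab AP AQ) (swp _ AD AQ) (swp _ A2 AQ) (abC Aab AD AP).
Qed.

Section Al.
Variable al : {perm GT gT}.
Hypothesis alA : al \in AutGd A U d.

Lemma al_on : perm_on G al.
Proof. by move: alA; rewrite inE => /andP[]. Qed.

Lemma alM x y : x \in G -> y \in G -> al (mul x y) = mul (al x) (al y).
Proof.
move: alA; rewrite inE => /andP[_ /forall_inP h] Gx Gy.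
by move/forall_inP: (h x Gx) => /(_ y Gy)/eqP.
Qed.

Lemma alG x : (al x \in G) = (x \in G).
Proof. exact: perm_closed al_on. Qed.

Lemma al_onto y : y \in G -> exists2 z, z \in G & al z = y.
Proof. by move=> Gy; exists (al^-1 y); rewrite ?permKV // -alG permKV. Qed.

Lemma al_io1 : al (io 1) = io 1.
Proof.
apply: idem; first by rewrite alG ioGd.
by rewrite -alM ?ioGd // ioM // mulg1.
Qed.

Definition Mset := [set al (io a) | a in A].

Lemma MG m : m \in Mset -> m \in G.
Proof. by case/imsetP => a Aa ->; rewrite alG ioGd. Qed.

Lemma MM m1 m2 : m1 \in Mset -> m2 \in Mset -> mul m1 m2 \in Mset.
Proof.
case/imsetP => a Aa -> /imsetP[b Ab ->]; rewrite -alM ?ioGd // ioM //.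
by apply/imsetP; exists (a * b); rewrite ?groupM.
Qed.

Lemma MC m1 m2 : m1 \in Mset -> m2 \in Mset -> mul m1 m2 = mul m2 m1.
Proof.
case/imsetP => a Aa -> /imsetP[b Ab ->]; rewrite -!alM ?ioGd // !ioM //.
by rewrite (abC Aab Aa Ab).
Qed.

Lemma Mnorm y m : y \in G -> m \in Mset -> exists2 m', m' \in Mset & mul y m = mul m' y.
Proof.
move=> Gy /imsetP[a Aa ->]; have [z Gz <-] := al_onto Gy.
exists (al (io (z.2 a))); first by apply/imsetP; exists (z.2 a); rewrite // uA //; case/GdP: Gz.
by rewrite -!alM ?ioGd // ?uA //; [rewrite ioMr | case/GdP: Gz].
Qed.

Lemma M6 z m : z \in A -> m \in Mset -> mul (io z) m \in Mset -> io z \in Mset.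
Proof.
move=> Az /imsetP[b Ab ->] /imsetP[b' Ab' h].
have [w Gw wz] := al_onto (ioGd Az).
move: h; rewrite -wz -alM ?ioGd // => /perm_inj; rewrite ioMr // ioMl //.
case: w Gw wz => w1 w2 Gw wz /= [h1 h2].
move: h1; rewrite h2 perm1 => /(canRL (mulKg b)) h1.
apply/imsetP; exists (b^-1 * b'); first by rewrite groupM ?groupV.
by rewrite /iotaA h1 mulgA.
Qed.

Lemma io1M : io 1 \in Mset.
Proof. by apply/imsetP; exists 1; rewrite ?al_io1. Qed.

Definition Nset := [set m.2 | m in Mset].

Lemma gsN : group_set Nset.
Proof.
apply/group_setP; split.
  by apply/imsetP; exists (io 1); rewrite ?io1M.
move=> _ _ /imsetP[m1 M1 ->] /imsetP[m2 M2 ->].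
by apply/imsetP; exists (mul m2 m1); rewrite ?MM.
Qed.

Definition Ng := Group gsN.

Lemma NU : Nset \subset U.
Proof. by apply/subsetP => _ /imsetP[m Mm ->]; case/GdP: (MG Mm). Qed.

Lemma NJ n u : n \in Nset -> u \in U -> n ^ u \in Nset.
Proof.
case/imsetP => m Mm -> Uu.
have Gy : ((1 : gT), u) \in G by rewrite /Gd in_setX /= group1.
have [m' Mm' /(congr1 snd) /= h] := Mnorm Gy Mm.
apply/imsetP; exists m' => //; move: h; rewrite /Defs.pcomp conjgE => h.
by rewrite h mulKg.
Qed.

Lemma Nnormal : Ng <| U.
Proof.
rewrite /normal NU /=; apply/subsetP => u Uu; rewrite inE.
apply/subsetP => x; rewrite mem_conjg => h.
by rewrite -(conjgKV u x) NJ.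
Qed.

Definition Cset := [set a in A | io a \in Mset].

Lemma gsC : group_set Cset.
Proof.
apply/group_setP; split; first by rewrite inE group1 io1M.
move=> a b; rewrite !inE => /andP[Aa Ma] /andP[Ab Mb].
by rewrite groupM // -ioM // MM.
Qed.

Definition Cg := Group gsC.

Lemma CA : Cset \subset A.
Proof. by apply/subsetP => a; rewrite inE => /andP[]. Qed.

Lemma Cii n c : n \in Nset -> c \in Cset -> n c = c.
Proof.
case/imsetP => m Mm -> /[dup] Cc; rewrite inE => /andP[Ac Mc].
have := MC Mm Mc; rewrite ioMr ?MG // !ioMl ?MG // => -[h].
exact: mulIg h.
Qed.

Lemma Ci n a : n \in Nset -> a \in A -> n a * a^-1 \in Cset.
Proof.
case/imsetP => m Mm -> Aa.
have [m' Mm' h] := Mnorm (ioGd Aa) Mm.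
move: h; rewrite ioMr ?MG // !ioMl ?MG // => -[h1 h2].
have Um : m.2 \in U by case/GdP: (MG Mm).
have Ana : m.2 a \in A by rewrite uA.
have Am : m.1 \in A by case/GdP: (MG Mm).
have : io (a * (m.2 a)^-1) \in Mset.
  apply: (M6 _ Mm); first by rewrite groupM ?groupV.
  rewrite ioMl ?MG //; case: m' Mm' h1 h2 => m1' m2' Mm' /= h1 h2.
  move: h1; rewrite -h2 => /esym/(canRL (mulKg _)) h1.
  suff -> : (a * (m.2 a)^-1 * m.1, m.2) = (m1', m2') by [].
  by rewrite h1 mulgA (abC Aab Aa (groupVr Ana)) h2.
move=> h; have : a * (m.2 a)^-1 \in Cset by rewrite inE groupM ?groupV.
by move/(groupVr (G:=Cg)); rewrite invMg invgK.
Qed.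

Lemma imA n : n \in Nset -> n @: A = A.
Proof. by move=> Nn; apply: im_perm_on; apply: Aut_on; apply: uAut; apply: (subsetP NU). Qed.

Lemma imC n : n \in Nset -> n @: Cset = Cset.
Proof.
move=> Nn; rewrite -[in RHS](imset_id Cset); apply: eq_in_imset => c Cc.
exact: Cii.
Qed.

Lemma im1 n : n \in Nset -> n @: [1 gT] = [1 gT].
Proof.
move=> Nn; rewrite imset_set1 (aut1 (G:=A)) //.
by apply: uAut; apply: (subsetP NU).
Qed.

Lemma cs : centralizes_series A Ng.
Proof.
have [A1|An1] := eqVneq (A : {set gT}) 1.
  exists [::]; split => //= X; rewrite inE => /eqP -> n; exact: imA.
have [CA'|CnA] := eqVneq Cset (A : {set gT}).
  exists [:: 1%G]; split => //=.
    rewrite proper1G An1 /= andbT; apply/forall_inP => n Nn.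
    apply/forall_inP => a Aa; rewrite Cii ?mulgV ?group1 // CA' //.
  move=> X; rewrite !inE => /orP[] /eqP -> n Nn; [exact: imA | exact: im1].
have [C1|Cn1] := eqVneq Cset 1.
  exists [:: 1%G]; split => //=.
    rewrite proper1G An1 /= andbT; apply/forall_inP => n Nn.
    apply/forall_inP => a Aa; rewrite -C1 Ci //.
  move=> X; rewrite !inE => /orP[] /eqP -> n Nn; [exact: imA | exact: im1].
exists [:: Cg; 1%G]; split => //=.
  rewrite properEneq CnA CA /= properEneq eq_sym Cn1 /= andbT.
  apply/and3P; split.
  - by apply/forall_inP => n Nn; apply/forall_inP => a Xa; exact: Ci.
  - exact: (sub1G Cg).
  - apply/forall_inP => n Nn; apply/forall_inP => a Xa.
    by rewrite Cii ?mulgV ?group1.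
move=> X; rewrite !inE => /or3P[] /eqP -> n Nn; [exact: imA | exact: imC | exact: im1].
Qed.

Hypothesis hF : F_relevant A U.

Lemma al_io2 a : a \in A -> (al (io a)).2 = 1.
Proof.
move=> Aa; have N1 := hF Nnormal cs.
have : (al (io a)).2 \in Ng by apply/imsetP; exists (al (io a)) => //; apply/imsetP; exists a.
by rewrite N1 => /set1P.
Qed.

Definition hf (x : gT) : gT := if x \in A then (al (io x)).1 * e else x.

Lemma al_ioE a : a \in A -> al (io a) = io ((al (io a)).1 * e).
Proof.
move=> Aa; have := al_io2 Aa; case: (al (io a)) => y w /= ->.
by rewrite /iotaA mulgK.
Qed.

Lemma hf_inj : injective hf.
Proof.
apply: perm_in_inj.
  move=> x y Ax Ay /= h; apply: io_inj; apply: (@perm_inj _ al).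
  by rewrite al_ioE // h -al_ioE.
apply/subsetP => _ /imsetP[x Ax ->]; rewrite groupM ?eA //.
by have := MG (imset_f (fun a => al (io a)) Ax); case/GdP.
Qed.

Definition hperm := perm hf_inj.

Lemma hpermE a : a \in A -> hperm a = (al (io a)).1 * e.
Proof. by move=> Aa; rewrite permE /hf Aa. Qed.

Lemma hperm_io a : a \in A -> al (io a) = io (hperm a).
Proof. by move=> Aa; rewrite hpermE // -al_ioE. Qed.

Lemma hpermA a : a \in A -> hperm a \in A.
Proof.
move=> Aa; rewrite hpermE // groupM ?eA //.
by have := MG (imset_f (fun a => al (io a)) Aa); case/GdP.
Qed.

Lemma hperm_Aut : hperm \in Aut A.
Proof.
rewrite inE; apply/andP; split.
  apply/subsetP => x; rewrite inE permE /hf; case: ifP => // _.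
  by rewrite eqxx.
apply/morphicP => a b Aa Ab; apply: io_inj.
by rewrite -hperm_io ?groupM // -ioM // alM ?ioGd // !hperm_io // ioM ?hpermA.
Qed.

Lemma restrA_spec : restrA A d al \in Aut A /\
  forall a, a \in A -> al (io a) = io (restrA A d al a).
Proof.
by rewrite (restrA_eq hperm_Aut hperm_io); split; [exact: hperm_Aut | exact: hperm_io].
Qed.

Local Notation gg := (restrA A d al).

Lemma ggA : gg \in Aut A. Proof. by case: restrA_spec. Qed.
Lemma gg_io a : a \in A -> al (io a) = io (gg a). Proof. by case: restrA_spec => _; apply. Qed.

Lemma S2 x : x \in G -> (al x).2 = x.2 ^ gg.
Proof.
move=> Gx; have Gy : al x \in G by rewrite alG.
have key a : a \in A -> (al x).2 (gg a) = gg (x.2 a).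
  move=> Aa; have Ux : x.2 \in U by case/GdP: Gx.
  have := congr1 al (ioMr Gx Aa).
  rewrite !alM ?ioGd ?uA // !gg_io ?uA //.
  rewrite (ioMr Gy (autA ggA Aa)) (ioMl _ Gy) (ioMl _ Gy).
  by case=> /mulIg.
have Uy : (al x).2 \in U by case/GdP: Gy.
have Ux : x.2 \in U by case/GdP: Gx.
apply/permP => b; case: (boolP (b \in A)) => Ab.
  have Ab' : gg^-1 b \in A by apply: autA Ab; rewrite groupV ggA.
  by rewrite conjgE !permM -{1}(permKV gg b) key.
rewrite (out_perm (Aut_on (uAut Uy))) // (out_perm (Aut_on _)) //.
by rewrite groupJ ?ggA ?uAut.
Qed.

Definition tt u := (al ((1 : gT), u)).1.

Lemma G1u u : u \in U -> ((1 : gT), u) \in G.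
Proof. by move=> Uu; rewrite /Gd in_setX /= group1. Qed.

Lemma ttA u : u \in U -> tt u \in A.
Proof. by move=> Uu; have := G1u Uu; rewrite -alG => /GdP[]. Qed.

Lemma UJ u : u \in U -> u ^ gg \in U.
Proof. by move=> Uu; have := G1u Uu; rewrite -alG => /GdP[_]; rewrite S2 ?G1u. Qed.

Lemma S1u u : u \in U -> al ((1 : gT), u) = (tt u, u ^ gg).
Proof. by move=> Uu; rewrite -(S2 (G1u Uu)) /tt; case: (al _). Qed.

Lemma S3 a u : a \in A -> u \in U -> al (a, u) = (gg a * tt u, u ^ gg).
Proof.
move=> Aa Uu; have -> : (a, u) = mul (io a) ((1 : gT), u) by rewrite ioMl ?G1u //= mulg1.
by rewrite alM ?ioGd ?G1u // gg_io // ioMl ?S1u // -S1u // alG G1u.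
Qed.

Lemma S5 u v : u \in U -> v \in U ->
  gg (d u v) * tt (Defs.pcomp u v) = tt u * (u ^ gg) (tt v) * d (u ^ gg) (v ^ gg).
Proof.
move=> Uu Uv.
have Upc : Defs.pcomp u v \in U by rewrite /Defs.pcomp groupM.
have E : mul ((1:gT),u) ((1:gT),v) = (d u v, Defs.pcomp u v).
  by rewrite /gdmul /= (aut1 (uAut Uu)) !mul1g.
have := alM (G1u Uu) (G1u Uv); rewrite E S3 ?dA // !S1u // /gdmul /=.
by case.
Qed.

Lemma ggN : gg \in 'N(U).
Proof.
rewrite inE; apply/subsetP => x; rewrite mem_conjg => h.
by rewrite -(conjgKV gg x) UJ.
Qed.

Lemma gg_Stab : gg \in StabN A U d.
Proof.
rewrite inE in_setI ggA ggN /=.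
apply/existsP; exists [ffun u => tt (u ^ gg^-1)]; apply/andP; split.
  apply/forall_inP => u Uu; rewrite ffunE ttA // memJ_norm ?groupV ?ggN //.
apply/forall_inP => u' Uu'; apply/forall_inP => v' Uv'.
rewrite /actZ2 /cobound !ffunE.
have Uu : u' ^ gg^-1 \in U by rewrite memJ_norm ?groupV ?ggN.
have Uv : v' ^ gg^-1 \in U by rewrite memJ_norm ?groupV ?ggN.
have -> : (Defs.pcomp u' v') ^ gg^-1 = Defs.pcomp (u' ^ gg^-1) (v' ^ gg^-1).
  by rewrite /Defs.pcomp conjMg.
move: (u' ^ gg^-1) (v' ^ gg^-1) Uu Uv (conjgKV gg u') (conjgKV gg v') => u v Uu Uv <- <-.
have := S5 Uu Uv => /(canRL (mulgK _)) ->.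
have Upc : Defs.pcomp u v \in U by rewrite /Defs.pcomp groupM.
apply/eqP; apply: ac1; rewrite ?ttA ?groupV ?ttA ?dA ?UJ // uA ?UJ ?ttA //.
Qed.

End Al.

Hypothesis hF : F_relevant A U.

Lemma morphR : {in AutGd A U d &, {morph restrA A d : x y / x * y}}.
Proof.
move=> al be alA beA /=; apply: restrA_eq; first by rewrite groupM ?ggA.
move=> a Aa; rewrite permM (gg_io alA hF Aa) (gg_io beA hF) ?permM //.
exact: autA (ggA alA hF) Aa.
Qed.

Section Sur.
Variables (g : {perm gT}) (c : {ffun {perm gT} -> gT}).
Hypotheses (gA : g \in Aut A) (gN : g \in 'N(U)) (cA : forall u, u \in U -> c u \in A)
  (ceq : forall u v, u \in U -> v \in U -> actZ2 g d u v = d u v * cobound c u v).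

Definition fs (x : GT gT) : GT gT := (g x.1 * c (x.2 ^ g), x.2 ^ g).

Lemma fs_inj : injective (fun x => if x \in G then fs x else x).
Proof.
apply: perm_in_inj.
  move=> [x1 x2] [y1 y2] _ _ [] /[swap] /conjg_inj <- /mulIg /perm_inj <-; done.
apply/subsetP => _ /imsetP[x /GdP[Ax Ux] ->].
by rewrite /Gd in_setX /= groupM ?autA ?cA ?memJ_norm.
Qed.

Definition alS := perm fs_inj.

Lemma alSE x : x \in G -> alS x = fs x.
Proof. by move=> Gx; rewrite permE Gx. Qed.

Lemma alS_Aut : alS \in AutGd A U d.
Proof.
rewrite inE; apply/andP; split.
  apply/subsetP => x; rewrite inE permE; case: ifP => //.
  by rewrite eqxx.
apply/forall_inP => x Gx; apply/forall_inP => y Gy; apply/eqP.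
rewrite !alSE ?GdM //.
case: x Gx => x1 x2 /GdP[/= Ax Ux]; case: y Gy => y1 y2 /GdP[/= Ay Uy].
rewrite /fs /gdmul /=.
have Ux' : x2 ^ g \in U by rewrite memJ_norm.
have Uy' : y2 ^ g \in U by rewrite memJ_norm.
have E : (Defs.pcomp x2 y2) ^ g = Defs.pcomp (x2 ^ g) (y2 ^ g) by rewrite /Defs.pcomp conjMg.
rewrite E; congr pair.
have Ex : (x2 ^ g) (g y1) = g (x2 y1) by rewrite conjgE !permM permK.
have := ceq Ux' Uy'; rewrite /actZ2 !conjgK => H.
rewrite (autM (uAut Ux')) ?autA ?cA // Ex.
rewrite (autM gA) ?groupM ?uA ?dA // (autM gA) ?uA // H /cobound.
apply: ac2.
- exact: autA gA (uA Ux Ay).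
- exact: dA Ux' Uy'.
- exact: uA Ux' (cA Uy').
- exact: cA Ux'.
- by apply: cA; rewrite /Defs.pcomp groupM.
Qed.

Lemma alS_restr : restrA A d alS = g.
Proof.
apply: restrA_eq => // a Aa; rewrite alSE ?ioGd // /fs /= conj1g.
have := ceq (group1 U) (group1 U); rewrite /actZ2 /cobound conj1g.
rewrite perm1 pc1u mulgV mul1g => H.
rewrite /iotaA (autM gA) ?groupV ?eA // (autV gA eA) H invMg.
by rewrite -!mulgA (abC Aab (groupVr eA) (cA (group1 U))) mulKg.
Qed.

End Sur.

Lemma Stab_sub : StabN A U d \subset restrA A d @: AutGd A U d.
Proof.
apply/subsetP => g; rewrite inE in_setI => /andP[/andP[gA gN] /existsP[c /andP[cA ce]]].
have cA' : forall u, u \in U -> c u \in A by move=> u Uu; exact: (forall_inP cA) u Uu.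
have ceq : forall u v, u \in U -> v \in U -> actZ2 g d u v = d u v * cobound c u v.
  move=> u v Uu Uv; apply/eqP.
  by move/forall_inP: ce => /(_ u Uu)/forall_inP/(_ v Uv).
apply/imsetP; exists (alS gA gN cA').
  exact: alS_Aut ceq.
by rewrite alS_restr.
Qed.

Lemma ac3 a P F D Q : P \in A -> F \in A -> D \in A -> Q \in A ->
  a * P * D * (F * Q) = a * F * (P * Q) * D.
Proof.
move=> AP AF AD AQ; rewrite -!mulgA; congr (_ * _).
by rewrite (swp _ AD AF) (swp _ AP AF) (abC Aab AD AQ).
Qed.

Definition phi (al : {perm GT gT}) : {ffun {perm gT} -> gT} :=
  [ffun u => if u \in U then (al ((1:gT), u)).1 else 1].

Definition Kset := [set al in AutGd A U d | restrA A d al == 1].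

Lemma KP al : al \in Kset -> al \in AutGd A U d /\ restrA A d al = 1.
Proof. by rewrite inE => /andP[? /eqP]. Qed.

Lemma Kform al a u : al \in Kset -> a \in A -> u \in U -> al (a, u) = (a * tt al u, u).
Proof.
case/KP => alA r1 Aa Uu; rewrite (S3 alA hF Aa Uu).
by rewrite r1 perm1 conjg1.
Qed.

Lemma phiE al u : u \in U -> phi al u = tt al u.
Proof. by move=> Uu; rewrite ffunE Uu. Qed.

Lemma phiZ1 al : al \in Kset -> phi al \in Z1 A U.
Proof.
move=> alK; have [alA r1] := KP alK.
rewrite inE; apply/and3P; split.
- by apply/forallP => u; apply/implyP => Uu; rewrite ffunE (negbTE Uu).
- by apply/forall_inP => u Uu; rewrite phiE ?ttA.
apply/forall_inP => u Uu; apply/forall_inP => v Uv.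
have Upc : Defs.pcomp u v \in U by rewrite /Defs.pcomp groupM.
rewrite !phiE //; apply/eqP.
have := S5 alA hF Uu Uv; rewrite r1 perm1 !conjg1.
rewrite (abC Aab (dA Uu Uv) (ttA alA Upc)) => /mulIg.
done.
Qed.

Lemma phi_inj : {in Kset &, injective phi}.
Proof.
move=> al be alK beK h; apply/permP => x.
case: (boolP (x \in G)) => Gx.
  case: x Gx => x1 x2 /GdP[/= Ax Ux]; rewrite !Kform //.
  by rewrite -!phiE // h.
have [alA _] := KP alK; have [beA _] := KP beK.
by rewrite !(out_perm (al_on _)).
Qed.

Lemma phiM : {in Kset &, forall al be, phi (al * be) = [ffun u => phi al u * phi be u]}.
Proof.
move=> al be alK beK; apply/ffunP => u; rewrite !ffunE; case: ifP => Uu; last by rewrite mulg1.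
rewrite permM Kform ?group1 // Kform ?mul1g ?ttA //.
by case/KP: alK.
Qed.

Section KSur.
Variable f : {ffun {perm gT} -> gT}.
Hypothesis fZ : f \in Z1 A U.

Lemma fP : [/\ forall u, u \notin U -> f u = 1, forall u, u \in U -> f u \in A &
  forall u v, u \in U -> v \in U -> f (Defs.pcomp u v) = f u * u (f v)].
Proof.
move: fZ; rewrite inE => /and3P[/forallP h1 /forall_inP h2 /forall_inP h3]; split.
- by move=> u Uu; apply/eqP; apply: (implyP (h1 u)).
- exact: h2.
by move=> u v Uu Uv; apply/eqP; move/forall_inP: (h3 u Uu); apply.
Qed.

Definition fk (x : GT gT) : GT gT := (x.1 * f x.2, x.2).

Lemma fk_inj : injective (fun x => if x \in G then fk x else x).
Proof.
apply: perm_in_inj.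
  move=> [x1 x2] [y1 y2] _ _ [] /[swap] <- /mulIg <-; done.
apply/subsetP => _ /imsetP[x /GdP[Ax Ux] ->]; have [_ fA _] := fP.
by rewrite /Gd in_setX /= groupM ?fA.
Qed.

Definition alK := perm fk_inj.

Lemma alKE x : x \in G -> alK x = fk x.
Proof. by move=> Gx; rewrite permE Gx. Qed.

Lemma alK_Aut : alK \in AutGd A U d.
Proof.
have [_ fA fc] := fP.
rewrite inE; apply/andP; split.
  apply/subsetP => x; rewrite inE permE; case: ifP => //.
  by rewrite eqxx.
apply/forall_inP => x Gx; apply/forall_inP => y Gy; apply/eqP.
rewrite !alKE ?GdM //.
case: x Gx => x1 x2 /GdP[/= Ax Ux]; case: y Gy => y1 y2 /GdP[/= Ay Uy].
rewrite /fk /gdmul /=; congr pair.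
rewrite fc // (autM (uAut Ux)) ?fA //.
by apply: ac3; rewrite ?uA ?fA ?dA.
Qed.

Lemma f1 : f 1 = 1.
Proof.
have [_ _ fc] := fP; have := fc 1 1 (group1 U) (group1 U).
rewrite pc1u perm1 => H; apply/esym/(mulgI (f 1)); rewrite mulg1 -{1}H //.
Qed.

Lemma alK_K : alK \in Kset.
Proof.
rewrite inE alK_Aut /=; apply/eqP; apply: restrA_eq; first exact: group1.
by move=> a Aa; rewrite alKE ?ioGd // /fk /= f1 mulg1 perm1.
Qed.

Lemma phi_alK : phi alK = f.
Proof.
have [f1' _ _] := fP.
apply/ffunP => u; rewrite ffunE; case: ifP => Uu; last by rewrite f1' ?Uu.
by rewrite alKE ?G1u //= mul1g.
Qed.

End KSur.

Lemma phi_sur : Z1 A U \subset phi @: Kset.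
Proof.
apply/subsetP => f fZ; apply/imsetP; exists (alK fZ); first exact: alK_K.
by rewrite phi_alK.
Qed.

End Main.
End Helpers.
Import Helpers.

Theorem theorem3p6 (gT : finGroupType) (A : {group gT}) (U : {group {perm gT}})
    (d : {perm gT} -> {perm gT} -> gT)
    (hA : exists2 s : seq {group gT},
            \big[dprod/1]_(H <- s) H = A & forall H, H \in s -> exists p, p.-abelem H)
    (hUA : U \subset Aut A) (hF : F_relevant A U) (hd : is_cocycle2 A U d) :
  [/\ (* restriction to A is well defined and lands in Aut(A) *)
      forall al, al \in AutGd A U d ->
        restrA A d al \in Aut A /\
        forall a, a \in A -> al (iotaA d a) = iotaA d (restrA A d al a),
      (* it is a homomorphism ... *)
      {in AutGd A U d &, {morph restrA A d : x y / x * y}},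
      (* ... onto Stab_{N(U)}([δ]) *)
      restrA A d @: AutGd A U d = StabN A U d &
      (* ker(eta) ≅ Z^1(U,A) *)
      exists phi : {perm GT gT} -> {ffun {perm gT} -> gT},
        let K := [set al in AutGd A U d | restrA A d al == 1] in
        [/\ {in K, forall al, phi al \in Z1 A U},
            {in K &, injective phi},
            Z1 A U \subset phi @: K &
            {in K &, forall al be, phi (al * be) = [ffun u => phi al u * phi be u]}]].

Proof.
have Aab : abelian A.
  case: hA => s hs hab.
  have := center_bigdprod hs.
  rewrite (eq_big_seq (fun H : {group gT} => (H : {set gT}))) ?hs => [ZA|H Hs].
    by apply/center_idP; rewrite -ZA.
  by apply/center_idP; case: (hab H Hs) => p /abelem_abelian.
split.
- by move=> al alA; apply: (restrA_spec Aab hUA hd alA hF).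
- exact: (morphR Aab hUA hd hF).
- apply/eqP; rewrite eqEsubset (Stab_sub Aab hUA hd) andbT.
  apply/subsetP => _ /imsetP[al alA ->]; exact: (gg_Stab Aab hUA hd alA hF).
exists (phi U); split.
- by move=> al alK; apply: (phiZ1 Aab hUA hd hF alK).
- exact: (phi_inj Aab hUA hd hF).
- exact: (phi_sur Aab hUA hd).
- exact: (phiM Aab hUA hd hF).
Qed.
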